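(* For all $n\in\mathbb{Z}^+$ and all vectors $\zeta=(\zeta^j)_{j\in I_n}$, $\xi=(\xi^j)_{j\in I_n}$ of $\mathbb{R}^N$, $$\sup_{p\in I_n}\Big|\sum_{j,k\in I_n}\mathbb{E}^\gamma\big[\tilde J_n^{pj}\tilde J_n^{-pk}\big]\zeta^j\xi^k\Big|\le ab\,\|\zeta\|_2\|\xi\|_2.$$
   Context: For $n\ge0$, $I_n=\{-n,\dots,n\}$, $N=2n+1$, ''$k\bmod I_n$'' is the element of $I_n$ congruent to $k$ mod $N$, and $F_N=e^{2\pi i/N}$. $R_{\mathcal J}:\mathbb{Z}^2\to\mathbb{R}$ satisfies $|R_{\mathcal J}(k,l)|\le a_kb_l$ for positive sequences with $|k|^3a_k\to0$ and $\sum_lb_l<\infty$, $a=\sum_ka_k$, $b=\sum_kb_k$; $R_{\mathcal J}$ is the autocorrelation of a centered stationary Gaussian field on $\mathbb{Z}^2$ with strictly positive spectral density. Under $\gamma$, $J_n=(J_n^{ij})_{i,j\in I_n}$ are centered jointly Gaussian with $\mathbb{E}^\gamma[J_n^{ij}J_n^{kl}]=\frac1NR_{\mathcal J}((k-i)\bmod I_n,(l-j)\bmod I_n)$. $\tilde J_n^{pk}=\sum_{j\in I_n}J_n^{jk}F_N^{-jp}$ for $p,k\in I_n$ (discrete Fourier transform in the first index), with $-p$ understood in $I_n$. *)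

(* Defs.v *)
From HB Require Import structures.
From mathcomp Require Import all_boot all_order all_algebra.
From mathcomp Require Import all_classical all_reals all_analysis.
From mathcomp Require Import complex.
Set Implicit Arguments. Unset Strict Implicit. Unset Printing Implicit Defensive.
Import Order.TTheory GRing.Theory Num.Theory.
Local Open Scope classical_set_scope.
Local Open Scope ring_scope.

Definition Nn (n : nat) : nat := n.*2.+1.

(* The index set I_n = {-n,...,n} is represented by 'I_(Nn n):
   the ordinal i stands for the integer i - n. *)
Definition idx {n : nat} (i : 'I_(Nn n)) : int := (i%:Z - n%:Z)%R.

(* "k mod I_n": the element of I_n congruent to k modulo N *)
Definition modI (n : nat) (k : int) : int :=
  (((k + n%:Z) %% (Nn n)%:Z)%Z - n%:Z)%R.

(* -p, understood in I_n (idx (negI p) = - idx p) *)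
Definition negI {n : nat} (p : 'I_(Nn n)) : 'I_(Nn n) := rev_ord p.

Definition FN {R : realType} (n : nat) : R[i] :=
  Complex (cos (pi *+ 2 / (Nn n)%:R)) (sin (pi *+ 2 / (Nn n)%:R)).

Definition tJ {R : realType} {T : Type} (n : nat)
  (J : 'I_(Nn n) -> 'I_(Nn n) -> T -> R) (p k : 'I_(Nn n)) : T -> R[i] :=
  fun w => \sum_(j : 'I_(Nn n)) ((J j k w)%:C%C * FN n ^ (- (idx j * idx p)))%R.

Definition cexpect {d} {T : measurableType d} {R : realType}
  (P : probability T R) (X : T -> R[i]) : R[i] :=
  Complex (fine ('E_P[fun w => complex.Re (X w)])%E) (fine ('E_P[fun w => complex.Im (X w)])%E).

Definition centered_gaussian {d} {T : measurableType d} {R : realType}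
  (P : probability T R) (X : T -> R) : Prop :=
  measurable_fun [set: T] X /\
  exists s : R,
    forall A : set R, measurable A ->
      P (X @^-1` A) = (if s == 0 then \d_(0:R) A else normal_prob 0 s A).

Definition jointly_centered_gaussian {d} {T : measurableType d} {R : realType}
  (P : probability T R) (I : finType) (J : I -> T -> R) : Prop :=
  forall c : I -> R, centered_gaussian P (fun w => \sum_(i : I) c i * J i w).

Definition has_pos_spectral_density {R : realType} (RJ : int -> int -> R) : Prop :=
  exists f : R * R -> R,
    (forall x, 0 < f x) /\
    measurable_fun [set: R * R] f /\
    let D := `[- pi, pi]%classic `*` `[- pi, pi]%classic in
    (lebesgue_measure \x lebesgue_measure)%E.-integrable D (fun x => (f x)%:E) /\
    forall k l : int,
      (RJ k l)%:E = (\int[(lebesgue_measure \x lebesgue_measure)%E]_(x in D)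
                       (f x * cos (k%:~R * x.1 + l%:~R * x.2))%:E)%E /\
      (0%:E = \int[(lebesgue_measure \x lebesgue_measure)%E]_(x in D)
                       (f x * sin (k%:~R * x.1 + l%:~R * x.2))%:E)%E.

Definition l2norm {R : realType} {m : nat} (v : 'I_m -> R) : R :=
  Num.sqrt (\sum_(j : 'I_m) v j ^+ 2).

(* Main.v *)
Require Import Defs.
From HB Require Import structures.
From mathcomp Require Import all_boot all_order all_algebra.
From mathcomp Require Import all_classical all_reals all_analysis.
From mathcomp Require Import complex.
From mathcomp Require Import zify lra measurable_realfun.
Import Order.TTheory GRing.Theory Num.Theory.
Local Open Scope classical_set_scope.
Local Open Scope ring_scope.

Section Helpers.
Local Open Scope complex_scope.
Lemma Nn_gt0 n : (0 < Nn n)%N. Proof. by []. Qed.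

Lemma modI_bound n (x : int) : (0 <= (x + n%:Z) %% (Nn n)%:Z)%Z /\ ((x + n%:Z) %% (Nn n)%:Z < (Nn n)%:Z)%Z.
Proof.
split; first by rewrite modz_ge0.
by rewrite ltz_pmod.
Qed.

Definition hI n (x : int) : 'I_(Nn n).
Proof.
apply: (@Ordinal _ `|((x + n%:Z) %% (Nn n)%:Z)%Z|%N).
have [h1 h2] := modI_bound n x.
by rewrite -(@ltz_nat) gez0_abs.
Defined.

Lemma idx_hI n x : idx (hI n x) = modI n x.
Proof.
rewrite /idx /modI /=; have [h1 h2] := modI_bound n x.
by rewrite gez0_abs.
Qed.

Lemma idx_inj_mod n (j j' : 'I_(Nn n)) :
  (idx j == idx j' %[mod (Nn n)%:Z])%Z -> j = j'.
Proof.
rewrite /idx eqz_modDr !modz_nat => /eqP [] h.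
apply/val_inj => /=.
by rewrite -(modn_small (ltn_ord j)) -(modn_small (ltn_ord j')) h.
Qed.

Lemma modI_sum_gen n {R : zmodType} (f : int -> R) (g : 'I_(Nn n) -> int) :
  (forall j j', (g j == g j' %[mod (Nn n)%:Z])%Z -> j = j') ->
  \sum_(j : 'I_(Nn n)) f (modI n (g j)) = \sum_(j : 'I_(Nn n)) f (idx j).
Proof.
move=> ginj.
rewrite [RHS](reindex_inj (h := fun j => hI n (g j))); last first.
  move=> j j' /(congr1 idx); rewrite !idx_hI /modI => /eqP.
  rewrite subr_eq addrNK => /eqP /(congr1 (fun x => x %% (Nn n)%:Z)%Z).
  rewrite !modz_mod => /eqP; rewrite eqz_modDr; exact: ginj.
by apply: eq_bigr => j _ /=; rewrite idx_hI.
Qed.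

Lemma modI_sumL n {R : zmodType} (f : int -> R) (c : int) :
  \sum_(j : 'I_(Nn n)) f (modI n (c - idx j)) = \sum_(j : 'I_(Nn n)) f (idx j).
Proof.
apply: modI_sum_gen => j j'; rewrite eqz_modDl => h; apply: idx_inj_mod.
by move: h; rewrite !eqz_mod_dvd -rpredN opprB opprK addrC.
Qed.

Lemma modI_sumR n {R : zmodType} (f : int -> R) (c : int) :
  \sum_(j : 'I_(Nn n)) f (modI n (idx j - c)) = \sum_(j : 'I_(Nn n)) f (idx j).
Proof.
apply: modI_sum_gen => j j'; rewrite eqz_modDr; exact: idx_inj_mod.
Qed.

Lemma idx_negI n (p : 'I_(Nn n)) : idx (negI p) = - idx p.
Proof.
rewrite /idx /negI /=; have := ltn_ord p; rewrite /Nn => hp; lia.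
Qed.

Section C.
Variable R : realType.

Lemma normc_sum (I : finType) (f : I -> R[i]) :
  Normc.normc (\sum_i f i) <= \sum_i Normc.normc (f i).
Proof.
apply: (big_ind2 (fun x y => Normc.normc x <= y)).
- by rewrite Normc.normc0.
- move=> x1 y1 x2 y2 h1 h2; apply: le_trans (le_normcD _ _) _.
  exact: lerD.
- by [].
Qed.

Lemma normc_real (r : R) : Normc.normc (r%:C) = `|r|.
Proof. by rewrite /Normc.normc /= expr0n /= addr0 sqrtr_sqr. Qed.

Lemma normc_FN n : Normc.normc (FN n : R[i]) = 1.
Proof. by rewrite /Normc.normc /FN /= cos2Dsin2 sqrtr1. Qed.

Lemma normc_exprn (x : R[i]) m : Normc.normc (x ^+ m) = Normc.normc x ^+ m.
Proof.
elim: m => [|m IH]; first by rewrite !expr0 Normc.normc1.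
by rewrite !exprS Normc.normcM IH.
Qed.

Lemma normc_FNz n (z : int) : Normc.normc ((FN n : R[i]) ^ z) = 1.
Proof.
case: z => m.
  by rewrite normc_exprn normc_FN expr1n.
by rewrite /exprz Normc.normcV normc_exprn normc_FN expr1n invr1.
Qed.

Lemma Re_sum (I : finType) (f : I -> R[i]) : complex.Re (\sum_i f i) = \sum_i complex.Re (f i).
Proof. by apply: (big_morph _ (fun x y => _) (erefl _)); case=> ? ? [] ? ?. Qed.

Lemma Im_sum (I : finType) (f : I -> R[i]) : complex.Im (\sum_i f i) = \sum_i complex.Im (f i).
Proof. by apply: (big_morph _ (fun x y => _) (erefl _)); case=> ? ? [] ? ?. Qed.

End C.
Section CE.
Local Open Scope ereal_scope.

Lemma E_sum d (T : measurableType d) (R : realType) (P : probability T R)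
  (I : finType) (X : I -> T -> R) :
  (forall i, X i \in Lfun P 1) ->
  'E_P[fun w => (\sum_i X i w)%R] = \sum_i 'E_P[X i].
Proof.
move=> hX.
rewrite (_ : (fun w => \sum_i X i w)%R = (\sum_(Xi <- map X (enum I)) Xi)%R); last first.
  by rewrite sumrfctE; apply/funext => w; rewrite big_map big_enum.
rewrite expectation_sum; first by rewrite big_map big_enum.
by move=> Xi /mapP [i _ ->]; exact: hX.
Qed.

Lemma cexpect_sum d (T : measurableType d) (R : realType) (P : probability T R)
  (I : finType) (r : I -> T -> R) (c : I -> R[i]) :
  (forall i, r i \in Lfun P 1) ->
  cexpect P (fun w => \sum_i ((r i w)%:C * c i))%R =
  (\sum_i (fine 'E_P[r i])%:C * c i)%R.
Proof.
move=> hr.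
have fin i : 'E_P[r i] \is a fin_num by exact: expectation_fin_num.
have key (f : R[i] -> R) (hf : forall (x : R) y, f (x%:C * y)%R = (x * f y)%R)
   (hs : forall (g : I -> R[i]), f (\sum_i g i)%R = (\sum_i f (g i))%R) :
  fine 'E_P[fun w => f (\sum_i ((r i w)%:C * c i))%R] =
  f (\sum_i (fine 'E_P[r i])%:C * c i)%R.
  under eq_fun do rewrite hs.
  rewrite hs; under eq_fun do under eq_bigr do rewrite hf.
  under [in RHS]eq_bigr do rewrite hf.
  rewrite E_sum; last by move=> i; apply: (@Lfun_scale _ _ _ P (r i) (f (c i)) 1%R) => //; exact: hr.
  have eZ i : 'E_P[fun w => r i w * f (c i)]%R = (f (c i))%:E * 'E_P[r i].
    exact: (expectationZl _ (hr _)).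
  rewrite (eq_bigr _ (fun i _ => eZ i)).
  rewrite -sum_fine; last by move=> i _; rewrite fin_numM.
  by apply: eq_bigr => i _; rewrite fineM // mulrC.
rewrite /cexpect (key (@complex.Re R)); last exact: Re_sum.
  rewrite (key (@complex.Im R)); last exact: Im_sum.
    by case: (\sum_i _)%R.
  by move=> x [y1 y2] /=; rewrite mul0r addr0.
by move=> x [y1 y2] /=; rewrite mul0r subr0.
Qed.

End CE.

Lemma schur (R : realType) (I : finType) (w : I -> I -> R) (B : R) (x y : I -> R) :
  (forall j k, 0 <= w j k) ->
  (forall k, \sum_j w j k = B) -> (forall j, \sum_k w j k = B) ->
  (forall j, 0 <= x j) -> (forall k, 0 <= y k) ->
  \sum_j \sum_k w j k * x j * y k <=
    B * (Num.sqrt (\sum_j x j ^+ 2) * Num.sqrt (\sum_k y k ^+ 2)).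
Proof.
move=> w0 cs rs x0 y0.
set u := Num.sqrt _; set v := Num.sqrt _.
have u0 : 0 <= u by exact: sqrtr_ge0.
have v0 : 0 <= v by exact: sqrtr_ge0.
have u2 : u ^+ 2 = \sum_j x j ^+ 2 by rewrite sqr_sqrtr // sumr_ge0 // => j _; exact: sqr_ge0.
have v2 : v ^+ 2 = \sum_k y k ^+ 2 by rewrite sqr_sqrtr // sumr_ge0 // => j _; exact: sqr_ge0.
have S0 : 0 <= \sum_j \sum_k w j k * x j * y k.
  by apply: sumr_ge0 => j _; apply: sumr_ge0 => k _; apply: mulr_ge0 => //; exact: mulr_ge0.
have [uv0|uvpos] := eqVneq (u * v) 0.
  have zero : \sum_j \sum_k w j k * x j * y k = 0.
    move/eqP: uv0; rewrite mulf_eq0 => /orP [] /eqP e.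
      have : \sum_j x j ^+ 2 = 0 by rewrite -u2 e expr0n.
      move/eqP; rewrite psumr_eq0; last by move=> j _; exact: sqr_ge0.
      move=> /allP hx; apply: big1 => j _; apply: big1 => k _.
      have := hx j (mem_index_enum j); rewrite /= sqrf_eq0 => /eqP ->.
      by rewrite mulr0 mul0r.
    have : \sum_k y k ^+ 2 = 0 by rewrite -v2 e expr0n.
    move/eqP; rewrite psumr_eq0; last by move=> j _; exact: sqr_ge0.
    move=> /allP hy; apply: big1 => j _; apply: big1 => k _.
    have := hy k (mem_index_enum k); rewrite /= sqrf_eq0 => /eqP ->.
    by rewrite mulr0.
  by rewrite zero uv0 mulr0.
have uvp : 0 < u * v by rewrite lt_def uvpos mulr_ge0.
have key : (u * v) * (\sum_j \sum_k w j k * x j * y k) <= (u * v) * (B * (u * v)).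
  have step : forall j k, 2 * (u * v) * (w j k * x j * y k) <=
      w j k * (x j ^+ 2 * v ^+ 2) + w j k * (y k ^+ 2 * u ^+ 2).
    move=> j k; rewrite -mulrDr.
    have h : 2 * (u * v) * (x j * y k) <= x j ^+ 2 * v ^+ 2 + y k ^+ 2 * u ^+ 2.
      have := sqr_ge0 (x j * v - y k * u); nra.
    have := ler_wpM2l (w0 j k) h; nra.
  have : 2 * (u * v) * (\sum_j \sum_k w j k * x j * y k) <=
      \sum_j \sum_k (w j k * (x j ^+ 2 * v ^+ 2) + w j k * (y k ^+ 2 * u ^+ 2)).
    rewrite mulr_sumr; apply: ler_sum => j _; rewrite mulr_sumr; apply: ler_sum => k _.
    exact: step.
  under [X in _ <= X]eq_bigr do rewrite big_split /=.
  rewrite big_split /=.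
  under [X in _ <= X + _]eq_bigr do rewrite -mulr_suml rs.
  rewrite [X in _ <= _ + X]exchange_big /=.
  under [X in _ <= _ + X]eq_bigr do rewrite -mulr_suml cs.
  rewrite -!mulr_sumr -!mulr_suml -u2 -v2 => h; nra.
by rewrite -(ler_pM2l uvp).
Qed.

Lemma idx_inj n : injective (@idx n).
Proof. by move=> i j; rewrite /idx => /addIr [] /val_inj. Qed.

Lemma sum_le_esum n (R : realType) (f : int -> R) : (forall k, 0 <= f k) ->
  ((\sum_(m : 'I_(Nn n)) f (idx m))%:E <= \esum_(k in [set: int]) (f k)%:E)%E.
Proof.
move=> f0; apply: esum_ge; exists (idx @` [set: 'I_(Nn n)]).
  split => //; apply: finite_image; exact: finite_finset.
rewrite fsbig_image; last by move=> i j _ _; exact: idx_inj.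
rewrite (_ : [set: 'I_(Nn n)] = [set` enum 'I_(Nn n)]); last first.
  by apply/seteqP; split => i //= _; rewrite mem_enum.
by rewrite -fsbig_seq ?enum_uniq // big_enum /= sumEFin.
Qed.

End Helpers.

Theorem corollaryB8 (R : realType) (RJ : int -> int -> R) (a b : int -> R)
  (a_pos : forall k, 0 < a k) (b_pos : forall l, 0 < b l)
  (RJ_bound : forall k l, `|RJ k l| <= a k * b l)
  (a_decay_pos : (fun m : nat => (m%:R ^+ 3 * a m%:Z)) @ \oo --> 0)
  (a_decay_neg : (fun m : nat => (m%:R ^+ 3 * a (- m%:Z))) @ \oo --> 0)
  (b_summable : (\esum_(l in [set: int]) (b l)%:E < +oo)%E)
  (RJ_spec : has_pos_spectral_density RJ)
  (n : nat) (n_pos : (0 < n)%N)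
  (d : measure_display) (T : measurableType d) (P : probability T R)
  (J : 'I_(Nn n) -> 'I_(Nn n) -> T -> R)
  (J_gauss : jointly_centered_gaussian P (fun ij : 'I_(Nn n) * 'I_(Nn n) => J ij.1 ij.2))
  (J_cov : forall i j k l : 'I_(Nn n),
     ('E_P[fun w => (J i j w * J k l w)%R])%E =
       ((Nn n)%:R^-1 * RJ (modI n (idx k - idx i)) (modI n (idx l - idx j)))%:E)
  (zeta xi : 'I_(Nn n) -> R) :
  ((\big[Num.max/0]_(p : 'I_(Nn n))
      Normc.normc (\sum_(j : 'I_(Nn n)) \sum_(k : 'I_(Nn n))
         cexpect P (fun w => tJ J p j w * tJ J (negI p) k w)
           * (zeta j)%:C%C * (xi k)%:C%C))%:E
   <= (\esum_(k in [set: int]) (a k)%:E) * (\esum_(l in [set: int]) (b l)%:E)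
      * (l2norm zeta * l2norm xi)%:E)%E.
Proof.
have mJ i j : measurable_fun [set: T] (J i j).
  have [m _] := J_gauss (fun u => if u == (i, j) then 1 else 0).
  rewrite (_ : (fun w => _) = J i j) in m => //.
  apply/funext => w; rewrite (bigD1 (i, j)) //= eqxx mul1r big1 ?addr0 //.
  by move=> u /negbTE ->; rewrite mul0r.
have LJ i j k l : (fun w => J i j w * J k l w) \in Lfun P 1.
  apply/Lfun1_integrable; apply/integrableP; split.
    by apply/measurable_EFinP; exact: measurable_funM.
  rewrite integral_fin_num_abs //; last exact: measurable_funM.
  by have := J_cov i j k l; rewrite unlock => ->.
have EJ i j k l : fine 'E_P[fun w => J i j w * J k l w] =
    (Nn n)%:R^-1 * RJ (modI n (idx k - idx i)) (modI n (idx l - idx j)).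
  by rewrite J_cov.
pose c (p : 'I_(Nn n)) (j' k' : 'I_(Nn n)) : R[i] :=
  FN n ^ (- (idx j' * idx p)) * FN n ^ (- (idx k' * idx (negI p))).
have tJprod p j k : (fun w => tJ J p j w * tJ J (negI p) k w) =
    (fun w => \sum_(u : 'I_(Nn n) * 'I_(Nn n)) ((J u.1 j w * J u.2 k w)%:C%C * c p u.1 u.2)).
  apply/funext => w; rewrite /tJ big_distrl /=.
  rewrite -(pair_bigA _ (fun j' k' => (J j' j w * J k' k w)%:C%C * c p j' k')) /=.
  apply: eq_bigr => j' _; rewrite big_distrr /=; apply: eq_bigr => k' _.
  by rewrite /c rmorphM /= mulrACA.
have cexp p j k : cexpect P (fun w => tJ J p j w * tJ J (negI p) k w) =
    \sum_(u : 'I_(Nn n) * 'I_(Nn n)) (fine 'E_P[fun w => J u.1 j w * J u.2 k w])%:C%C * c p u.1 u.2.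
  by rewrite tJprod cexpect_sum // => u; exact: LJ.
set A := \sum_(m : 'I_(Nn n)) a (idx m).
set B := \sum_(m : 'I_(Nn n)) b (idx m).
have A0 : 0 <= A by apply: sumr_ge0 => m _; exact: ltW.
have B0 : 0 <= B by apply: sumr_ge0 => m _; exact: ltW.
have bnd p j k : Normc.normc (cexpect P (fun w => tJ J p j w * tJ J (negI p) k w))
    <= A * b (modI n (idx k - idx j)).
  rewrite cexp; apply: le_trans (@normc_sum _ _ _) _.
  under eq_bigr do rewrite Normc.normcM normc_real /c Normc.normcM !normc_FNz !mulr1 EJ.
  apply: le_trans (_ : _ <= \sum_(u : 'I_(Nn n) * 'I_(Nn n))
      (Nn n)%:R^-1 * (a (modI n (idx u.2 - idx u.1)) * b (modI n (idx k - idx j)))) _.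
    apply: ler_sum => u _; rewrite normrM ger0_norm ?invr_ge0 //.
    by apply: ler_wpM2l; [rewrite invr_ge0 | exact: RJ_bound].
  rewrite -mulr_sumr -mulr_suml -(pair_bigA _ (fun x y => a (modI n (idx y - idx x)))) /=.
  under eq_bigr do rewrite modI_sumR.
  rewrite sumr_const card_ord -/A -(mulr_natl A) !mulrA mulVf ?mul1r // pnatr_eq0.
  by rewrite /Nn.
have l2abs (v : 'I_(Nn n) -> R) : l2norm v = Num.sqrt (\sum_j `|v j| ^+ 2).
  by rewrite /l2norm; congr Num.sqrt; apply: eq_bigr => j _; rewrite real_normK // num_real.
have main p : Normc.normc (\sum_(j : 'I_(Nn n)) \sum_(k : 'I_(Nn n))
         cexpect P (fun w => tJ J p j w * tJ J (negI p) k w)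
           * (zeta j)%:C%C * (xi k)%:C%C) <= A * (B * (l2norm zeta * l2norm xi)).
  apply: le_trans (@normc_sum _ _ _) _.
  apply: le_trans (_ : _ <= \sum_(j : 'I_(Nn n)) \sum_(k : 'I_(Nn n))
     A * (b (modI n (idx k - idx j)) * `|zeta j| * `|xi k|)) _.
    apply: ler_sum => j _; apply: le_trans (@normc_sum _ _ _) _.
    apply: ler_sum => k _; rewrite !Normc.normcM !normc_real !mulrA.
    by apply: ler_wpM2r => //; apply: ler_wpM2r => //; exact: bnd.
  under eq_bigr do rewrite -mulr_sumr.
  rewrite -mulr_sumr; apply: ler_wpM2l => //.
  rewrite !l2abs; apply: schur.
  - by move=> j k; exact: ltW.
  - by move=> k; rewrite modI_sumL.
  - by move=> j; rewrite modI_sumR.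
  - by move=> j.
  - by move=> j.
have l2_0 (v : 'I_(Nn n) -> R) : 0 <= l2norm v by exact: sqrtr_ge0.
have C0 : 0 <= A * (B * (l2norm zeta * l2norm xi)).
  by apply: mulr_ge0 => //; apply: mulr_ge0 => //; exact: mulr_ge0.
apply: le_trans (_ : _ <= (A * B * (l2norm zeta * l2norm xi))%:E)%E _.
  rewrite lee_fin -mulrA; apply: (big_ind (fun x => x <= _)) => //.
  by move=> x y hx hy; rewrite ge_max hx hy.
rewrite !EFinM; apply: lee_pmul => //; first by rewrite -EFinM lee_fin mulr_ge0.
  by rewrite lee_fin mulr_ge0.
apply: lee_pmul => //; try by rewrite lee_fin.
  by apply: sum_le_esum => k; exact: ltW.
by apply: sum_le_esum => k; exact: ltW.
Qed.
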